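(* Let $J\subseteq[n]$ and let $\pi,\hat\pi\in S_J$ be joined by an edge of the bridge polytope $\mathrm{Br}_J$, where $\hat\pi=(i\,\ell)\pi$ for some $i<\ell$. Then each of $i+1,i+2,\dots,\ell-1$ is a fixed point of both $\pi$ and $\hat\pi$.
   Context: For $J\subseteq[n]$, $S_J=\{\pi\in S_n:\ \pi(j)\ge j \text{ for } j\in J,\ \pi(j)\le j \text{ for } j\notin J\}$ and $\mathrm{Br}_J=\operatorname{conv}\{(\pi(1),\dots,\pi(n)):\pi\in S_J\}\subset\mathbb{R}^n$, each $\pi\in S_J$ being identified with the vertex $(\pi(1),\dots,\pi(n))$. For a transposition $(i\,\ell)$, $(i\,\ell)\pi$ denotes $(i\,\ell)\circ\pi$, the permutation obtained from $\pi$ by swapping the values $i$ and $\ell$. *)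

(* Defs.v *)
From HB Require Import structures.
From mathcomp Require Import all_boot all_order all_algebra all_fingroup.
Set Implicit Arguments. Unset Strict Implicit. Unset Printing Implicit Defensive.
Import Order.TTheory GRing.Theory Num.Theory.
Local Open Scope ring_scope.

(* Indices [n] = {1..n} are represented by 'I_n = {0..n-1}; value j+1 <-> j. *)

Definition in_SJ (n : nat) (J : {set 'I_n}) (p : {perm 'I_n}) : bool :=
  [forall j : 'I_n, if j \in J then (j <= p j)%N else (p j <= j)%N].

Definition perm_vec (R : realFieldType) (n : nat) (p : {perm 'I_n}) : 'rV[R]_n :=
  \row_(j < n) ((p j).+1)%:R.

Definition in_Br (R : realFieldType) (n : nat) (J : {set 'I_n}) (x : 'rV[R]_n) : Prop :=
  exists w : {perm 'I_n} -> R,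
    [/\ forall s, 0 <= w s,
        forall s, ~~ in_SJ J s -> w s = 0,
        \sum_(s : {perm 'I_n}) w s = 1
      & x = \sum_(s : {perm 'I_n}) w s *: perm_vec R s].

Definition rdot (R : realFieldType) (n : nat) (c x : 'rV[R]_n) : R :=
  \sum_(i < n) c 0 i * x 0 i.

Definition in_segment (R : realFieldType) (n : nat) (v w x : 'rV[R]_n) : Prop :=
  exists t : R, [/\ 0 <= t, t <= 1 & x = (1 - t) *: v + t *: w].

Definition is_edge (R : realFieldType) (n : nat) (P : 'rV[R]_n -> Prop)
  (v w : 'rV[R]_n) : Prop :=
  v <> w /\
  exists c : 'rV[R]_n,
    (forall x, P x -> rdot c x <= rdot c v) /\
    (forall x, (P x /\ rdot c x = rdot c v) <-> in_segment v w x).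

(* Main.v *)
Require Import Defs.
From HB Require Import structures.
From mathcomp Require Import all_boot all_order all_algebra all_fingroup.
From mathcomp Require Import zify ring lra.
Import Order.TTheory GRing.Theory Num.Theory.
Set Implicit Arguments. Unset Strict Implicit.

Section Helpers.
Local Open Scope ring_scope.
Variables (R : realFieldType) (n : nat) (J : {set 'I_n}).

Definition fv (c : 'rV[R]_n) (s : {perm 'I_n}) := rdot c (perm_vec R s).

Lemma fD c s p : fv c s - fv c p = \sum_j c 0 j * ((s j)%:R - (p j)%:R).
Proof.
rewrite /fv /rdot -sumrB; apply: eq_bigr => j _; rewrite !mxE -!natr1; ring.
Qed.

Lemma perm_Br s : in_SJ J s -> in_Br J (perm_vec R s).
Proof.
move=> Hs; exists (fun t => if t == s then 1 else 0); split.
- by move=> t; case: eqP.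
- by move=> t; case: eqP => // ->; rewrite Hs.
- by rewrite (bigD1 s) //= eqxx big1 ?addr0 // => t /negbTE ->.
- by rewrite (bigD1 s) //= eqxx scale1r big1 ?addr0 // => t /negbTE ->; rewrite scale0r.
Qed.

Lemma edge_strict c p ph s q :
  (forall x, in_Br J x -> rdot c x <= rdot c (perm_vec R p)) ->
  (forall x, (in_Br J x /\ rdot c x = rdot c (perm_vec R p)) <->
     in_segment (perm_vec R p) (perm_vec R ph) x) ->
  in_SJ J s -> ph q = p q -> s q != p q -> fv c s < fv c p.
Proof.
move=> H1 H2 Hs Hq Hne; rewrite /fv lt_neqAle H1 ?andbT; last exact: perm_Br.
apply/eqP => Heq.
have [t [_ _ Ht]] := (proj1 (H2 _)) (conj (perm_Br Hs) Heq).
have := congr1 (fun x : 'rV[R]_n => x 0 q) Ht; rewrite !mxE Hq => E.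
have : ((s q).+1)%:R = ((p q).+1)%:R :> R by rewrite E; ring.
move/eqP; rewrite eqr_nat eqSS => E2.
exact: (negP Hne E2).
Qed.

Lemma swapD c p (x m : 'I_n) : x != m ->
  fv c (p * tperm x m)%g - fv c p =
  (c 0 (p^-1 x)%g - c 0 (p^-1 m)%g) * ((m : nat)%:R - (x : nat)%:R).
Proof.
move=> Hxm; rewrite fD (reindex_inj (@perm_inj _ (p^-1)%g)) /=.
rewrite (bigD1 x) // (bigD1 m) /=; last by rewrite eq_sym.
rewrite big1 ?addr0; last first.
  move=> j /andP [Hjx Hjm]; rewrite permM permKV tpermD ?subrr ?mulr0 //.
  by rewrite eq_sym. by rewrite eq_sym.
rewrite !permM !permKV tpermL tpermR; ring.
Qed.

End Helpers.

(* (i l) o pi is written (pi * tperm i l)%g, since (s * t) x = t (s x). *)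
Theorem proposition4p6 (R : realFieldType) (n : nat) (J : {set 'I_n})
  (pi : {perm 'I_n}) (i l : 'I_n) :
  in_SJ J pi -> in_SJ J (pi * tperm i l)%g -> (i < l)%N ->
  is_edge (@in_Br R n J) (perm_vec R pi) (perm_vec R (pi * tperm i l)%g) ->
  forall k : 'I_n, (i < k)%N -> (k < l)%N ->
    pi k = k /\ (pi * tperm i l)%g k = k.
Proof.
Local Open Scope ring_scope.
move=> Hp Hph Hil [Hneq [c [H1 H2]]] k Hik Hkl.
have neq_ord : forall u v : 'I_n, (u : nat) <> v -> u != v.
  by move=> u v H; apply/eqP => E; apply: H; rewrite E.
have phE : forall j, (pi * tperm i l)%g j = tperm i l (pi j) by move=> j; rewrite permM.
have Hseg : in_segment (perm_vec R pi) (perm_vec R (pi * tperm i l)%g)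
                       (perm_vec R (pi * tperm i l)%g).
  exists 1; split; [exact: ler01 | exact: lexx |].
  by rewrite subrr scale0r add0r scale1r.
have [_ Hfph] := proj2 (H2 _) Hseg.
pose cond := fun (q x : 'I_n) => if q \in J then (q <= x)%N else (x <= q)%N.
have Hpj : forall j, cond j (pi j) by move=> j; exact: (forallP Hp j).
have Hphj : forall j, cond j (tperm i l (pi j)).
  by move=> j; rewrite -phE; exact: (forallP Hph j).
have acc : forall j (y : 'I_n), (pi j = i \/ pi j = l) -> (i <= y <= l)%N -> cond j y.
  move=> j y Hj /andP [Y1 Y2]; have := Hpj j; have := Hphj j; rewrite /cond.
  by case: Hj => ->; rewrite ?tpermL ?tpermR; case: (j \in J) => A B; lia.
pose a := (pi^-1 i)%g. pose b := (pi^-1 l)%g.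
have Hil' : i != l by apply: neq_ord; lia.
have Hab : c 0 a = c 0 b.
  have := swapD c pi Hil'; rewrite -/(fv c (pi * tperm i l)%g) /fv Hfph subrr.
  move=> /esym /eqP; rewrite mulf_eq0 => /orP [/eqP|]; first by move/eqP; rewrite subr_eq0 => /eqP.
  rewrite subr_eq0 eqr_nat => /eqP E; lia.
have adm : forall q (x : 'I_n), (i < pi q < l)%N -> (x = i \/ x = l) -> cond q x ->
    in_SJ J (pi * tperm x (pi q))%g.
  move=> q x Hm Hx Hc; apply/forallP => j; rewrite permM.
  case: tpermP => [Hj|Hj|Hj1 Hj2].
  - apply: acc; last by lia.
    by case: Hx => E; rewrite Hj E; [left|right].
  - by have -> : j = q by apply: (@perm_inj _ pi).
  - exact: Hpj.
have sign : forall q (x : 'I_n), (i < pi q < l)%N -> (x = i \/ x = l) -> cond q x ->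
    (c 0 b - c 0 q) * ((pi q : nat)%:R - (x : nat)%:R) < 0.
  move=> q x Hm Hx Hc.
  have Hxq : x != pi q by apply: neq_ord; case: Hx => ->; lia.
  have Hs := edge_strict H1 H2 (adm q x Hm Hx Hc) (q:=q).
  have := swapD c pi Hxq; rewrite permK.
  have -> : c 0 (pi^-1 x)%g = c 0 b by case: Hx => ->; rewrite ?Hab.
  move=> <-; rewrite subr_lt0; apply: Hs.
  - rewrite phE tpermD //; apply: neq_ord; lia.
  - by rewrite permM tpermR.
have Hk : pi k = k.
  apply/eqP; apply: contraT => Hnk.
  case: (boolP [exists q : 'I_n, ~~ ((i < q) && (q < l))%N && ((i < pi q) && (pi q < l))%N]).
  - case/existsP => q /andP [Hq Hm].
    have Hc1 : cond q l by have := Hpj q; rewrite /cond; case: (q \in J); lia.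
    have Hc2 : cond q i by have := Hpj q; rewrite /cond; case: (q \in J); lia.
    have sA := sign q l Hm (or_intror erefl) Hc1.
    have sB := sign q i Hm (or_introl erefl) Hc2.
    have m1 : ((pi q : nat)%:R : R) < (l : nat)%:R by rewrite ltr_nat; lia.
    have m2 : ((i : nat)%:R : R) < (pi q : nat)%:R by rewrite ltr_nat; lia.
    have X1 : 0 < c 0 b - c 0 q by nra.
    have X2 : c 0 b - c 0 q < 0 by nra.
    by move: (lt_trans X1 X2); rewrite ltxx.
  - move/negP => Hno.
    have Hout : forall q : 'I_n, ~~ ((i < q) && (q < l))%N -> ~~ ((i < pi q) && (pi q < l))%N.
      move=> q Hq; apply/negP => Hm; apply: Hno; apply/existsP; exists q; by rewrite Hq Hm.
    pose P := [set q : 'I_n | ((i < q) && (q < l))%N].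
    have Hin : forall q : 'I_n, ((i < q) && (q < l))%N -> ((i < pi q) && (pi q < l))%N.
      have sub : pi @^-1: P \subset P.
        apply/subsetP => q; rewrite !inE; apply: contraLR; exact: Hout.
      have [_ E] := subset_leqif_cards sub.
      rewrite card_preimset in E; last exact: perm_inj.
      rewrite eqxx in E; move/esym/eqP: E => E q Hq.
      have : q \in pi @^-1: P by rewrite E inE.
      by rewrite !inE.
    pose g := fun q : 'I_n => if ((i < q) && (q < l))%N then q else pi q.
    have ginj : injective g.
      move=> x y; rewrite /g; case: ifP => Hx; case: ifP => Hy //.
      - move=> E; have := Hout y (negbT Hy); by rewrite -E Hx.
      - move=> E; have := Hout x (negbT Hx); by rewrite E Hy.
      - exact: perm_inj.
    pose s := perm ginj.
    have sE : forall j, s j = g j by move=> j; rewrite permE.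
    have Hs : in_SJ J s.
      apply/forallP => j; rewrite sE /g; case Hj: ((i < j) && (j < l))%N; first by case: (j \in J).
      exact: Hpj.
    have Hkin : ((i < k) && (k < l))%N by rewrite Hik Hkl.
    have lt := edge_strict H1 H2 Hs (q:=k).
    have Hlt : fv c s < fv c pi.
      apply: lt.
      - have := Hin k Hkin => /andP [A B].
        rewrite phE tpermD //; apply: neq_ord; lia.
      - by rewrite sE /g Hkin eq_sym.
    have Hge : 0 <= fv c s - fv c pi.
      rewrite fD.
      have sumE : \sum_j ((s j : nat)%:R : R) = \sum_j ((pi j : nat)%:R).
        rewrite -(@reindex_inj _ _ _ _ s xpredT (fun j : 'I_n => ((j : nat)%:R : R))) //; last exact: perm_inj.
        by rewrite -(@reindex_inj _ _ _ _ pi xpredT (fun j : 'I_n => ((j : nat)%:R : R))) //; exact: perm_inj.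
      have -> : \sum_j c 0 j * ((s j : nat)%:R - (pi j : nat)%:R) =
         \sum_j (c 0 j - c 0 b) * ((s j : nat)%:R - (pi j : nat)%:R) +
         c 0 b * \sum_j ((s j : nat)%:R - (pi j : nat)%:R).
        rewrite mulr_sumr -big_split; apply: eq_bigr => j _ /=; ring.
      rewrite sumrB sumE subrr mulr0 addr0.
      apply: sumr_ge0 => j _; rewrite sE /g; case: ifP => Hj; last by rewrite subrr mulr0.
      have Hm := Hin j Hj.
      have m1 : ((pi j : nat)%:R : R) < (l : nat)%:R by rewrite ltr_nat; lia.
      have m2 : ((i : nat)%:R : R) < (pi j : nat)%:R by rewrite ltr_nat; lia.
      have := Hpj j; rewrite /cond; case HJ: (j \in J) => Hle.
      + have sA := sign j l Hm (or_intror erefl) (ltac:(rewrite /cond HJ; lia)).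
        have Hle' : ((j : nat)%:R : R) <= (pi j : nat)%:R by rewrite ler_nat.
        nra.
      + have sB := sign j i Hm (or_introl erefl) (ltac:(rewrite /cond HJ; lia)).
        have Hle' : ((pi j : nat)%:R : R) <= (j : nat)%:R by rewrite ler_nat.
        nra.
    by move: Hge; rewrite subr_ge0 leNgt Hlt.
split=> //.
rewrite phE Hk tpermD //; apply: neq_ord; lia.
Qed.
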